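(* Let $r\ge2$, $d_1=1$, $\lambda_1=0$, $d_i\ge2$ integers and $\lambda_i>0$ for $i=2,\dots,r$, $n=\sum_id_i$. In $\mathbb R^{2r-1}$ with coordinates $(X_1,\dots,X_r,Y_2,\dots,Y_r)$ let $\mathcal L=\sum_{i=1}^rX_i^2+\sum_{i=2}^r\lambda_iY_i^2-1$, $\mathcal H=\sum_{i=1}^r\sqrt{d_i}X_i$, $\mathcal D=\{\mathcal L=0,\ \mathcal H=1\}\cap\{Y_i>0\ (i\ge2),\ |X_1-1|<\sqrt2\}$, and $$\hat{\mathscr F}=\frac{1-\frac{1}{n-1}(1-X_1)^2}{\prod_{i=2}^r\big(\sqrt{\lambda_i}\,Y_i\big)^{\frac{2d_i}{n-1}}}.$$ Then $\hat{\mathscr F}$, restricted to $\mathcal D$ (an open subset of the smooth submanifold $\{\mathcal L=0,\mathcal H=1\}$), has a unique critical point in $\mathcal D$, and this point is the global minimum point of $\hat{\mathscr F}$ on $\mathcal D$. *)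

(* Defs.v *)
From HB Require Import structures.
From mathcomp Require Import all_boot all_order all_algebra.
From mathcomp Require Import all_classical all_reals all_analysis.
Set Implicit Arguments. Unset Strict Implicit. Unset Printing Implicit Defensive.
Import Order.TTheory GRing.Theory Num.Theory.
Import numFieldNormedType.Exports.
Local Open Scope ring_scope.

(* Points of R^(2r-1) are row vectors p : 'rV[R]_(r + r.-1).
   The first block lsubmx p holds (X_1,...,X_r): X_{i+1} = lsubmx p 0 i, i : 'I_r.
   The second block rsubmx p holds (Y_2,...,Y_r): Y_{j+2} = rsubmx p 0 j, j : 'I_(r.-1).
   d, lam : nat -> _ are indexed as in the paper (d 1, ..., d r). *)

Section Defs.
Variable R : realType.

Definition Xc (r : nat) (p : 'rV[R]_(r + r.-1)) (i : 'I_r) : R := lsubmx p 0 i.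
Definition Yc (r : nat) (p : 'rV[R]_(r + r.-1)) (j : 'I_r.-1) : R := rsubmx p 0 j.

(* X_1 (the coordinate of index 0 in the first block; r >= 1 is assumed). *)
Definition X1 (r : nat) (p : 'rV[R]_(r + r.-1)) : R :=
  \sum_(i < r | val i == 0%N) Xc p i.

Definition ntot (r : nat) (d : nat -> nat) : nat := \sum_(1 <= i < r.+1) d i.

Definition Lfun (r : nat) (lam : nat -> R) (p : 'rV[R]_(r + r.-1)) : R :=
  \sum_(i < r) Xc p i ^+ 2 + \sum_(j < r.-1) lam j.+2 * Yc p j ^+ 2 - 1.

Definition Hfun (r : nat) (d : nat -> nat) (p : 'rV[R]_(r + r.-1)) : R :=
  \sum_(i < r) Num.sqrt (d i.+1)%:R * Xc p i.

Definition Ffun (r : nat) (d : nat -> nat) (lam : nat -> R)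
    (p : 'rV[R]_(r + r.-1)) : R :=
  let nm1 : R := (ntot r d)%:R - 1 in
  (1 - nm1^-1 * (1 - X1 p) ^+ 2) /
  \prod_(j < r.-1) (Num.sqrt (lam j.+2) * Yc p j) `^ (2 * (d j.+2)%:R / nm1).

Definition Dset (r : nat) (d : nat -> nat) (lam : nat -> R)
    (p : 'rV[R]_(r + r.-1)) : Prop :=
  [/\ Lfun lam p = 0, Hfun d p = 1, (forall j : 'I_r.-1, 0 < Yc p j)
    & `|X1 p - 1| < Num.sqrt 2].

(* Critical point of the restriction of F to the submanifold {L = 0, H = 1}:
   F is differentiable at p and dF_p vanishes on the tangent space
   ker dL_p /\ ker dH_p. *)
Definition crit_on_D (r : nat) (d : nat -> nat) (lam : nat -> R)
    (p : 'rV[R]_(r + r.-1)) : Prop :=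
  [/\ Dset d lam p, differentiable (Ffun d lam) p
    & forall v : 'rV[R]_(r + r.-1),
        'd (Lfun lam) p v = 0 -> 'd (Hfun d) p v = 0 -> 'd (Ffun d lam) p v = 0].

End Defs.

(* Main.v *)
Require Import Defs.
From HB Require Import structures.
From mathcomp Require Import all_boot all_order all_algebra.
From mathcomp Require Import all_classical all_reals all_analysis.
From mathcomp Require Import ring lra.
Set Implicit Arguments. Unset Strict Implicit. Unset Printing Implicit Defensive.
Import Order.TTheory GRing.Theory Num.Theory.
Import numFieldNormedType.Exports.
Local Open Scope ring_scope.

Section HasD.
Variables (R : realType) (N : nat).
Notation V := 'rV[R]_N.

Definition HasD (f : V -> R) (x : V) (df : V -> R) :=
  differentiable f x /\ forall v, 'd f x v = df v.

Lemma HasD_ext f g x df : f = g -> HasD g x df -> HasD f x df.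
Proof. by move=> ->. Qed.

Lemma HasD_cst (c : R) x : HasD (fun _ => c) x (fun _ => 0).
Proof.
split; first exact: differentiable_cst.
by move=> v; rewrite (diff_cst (V:=V) c x).
Qed.

Lemma HasD_coord (k : 'I_N) x : HasD (fun q : V => q 0 k) x (fun v => v 0 k).
Proof.
have @f : {linear V -> R}.
  by exists (fun N : V => N 0 k); do 2![eexists]; do ?[constructor];
     rewrite ?mxE// => ? *; rewrite ?mxE//; move=> ?; rewrite !mxE.
rewrite (_ : (fun _ => _) = f) //; split.
  exact/linear_differentiable/coord_continuous.
by move=> v; rewrite diff_lin //; apply: coord_continuous.
Qed.

Lemma HasD_add f g x df dg : HasD f x df -> HasD g x dg ->
  HasD (fun q => f q + g q) x (fun v => df v + dg v).
Proof.
move=> [hf ef] [hg eg]; split; first exact: differentiableD.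
by move=> v; rewrite (diffD hf hg) /= ef eg.
Qed.

Lemma HasD_mul f g x df dg : HasD f x df -> HasD g x dg ->
  HasD (fun q => f q * g q) x (fun v => f x * dg v + g x * df v).
Proof.
move=> [hf ef] [hg eg]; split; first exact: differentiableM.
move=> v; have := diffM hf hg => /(congr1 (fun F => F v)) ->.
by rewrite -ef -eg addrfctE.
Qed.

Lemma HasD_inv f x df : HasD f x df -> f x != 0 ->
  HasD (fun q => (f q)^-1) x (fun v => - (f x)^-2 * df v).
Proof.
move=> [hf ef] h; split; first exact: differentiableV.
by move=> v; rewrite (diffV hf h) /= ef.
Qed.

Lemma HasD_comp1 (g : R -> R) g' f x df : HasD f x df ->
  is_derive (f x) 1 g g' ->
  HasD (fun q => g (f q)) x (fun v => g' * df v).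
Proof.
move=> [hf ef] hg.
have dg : differentiable g (f x) by apply/derivable1_diffP; exact: ex_derive.
split; first exact: (differentiable_comp hf dg).
move=> v; rewrite (diff_comp hf dg) /= ef diff1E // derive1E derive_val.
by rewrite mulrC.
Qed.

Lemma HasD_eqd f x df dg : (forall v, df v = dg v) -> HasD f x df -> HasD f x dg.
Proof. by move=> e [h1 h2]; split => // v; rewrite h2 e. Qed.

Lemma HasD_sum (I : Type) (s : seq I) (f : I -> V -> R) x (df : I -> V -> R) :
  (forall i, HasD (f i) x (df i)) ->
  HasD (fun q => \sum_(i <- s) f i q) x (fun v => \sum_(i <- s) df i v).
Proof.
move=> h; elim: s => [|i s IH].
  apply: HasD_eqd (HasD_ext _ (HasD_cst 0 x)) => [v|]; first by rewrite big_nil.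
  by apply/funext => q; rewrite big_nil.
apply: HasD_eqd (HasD_ext _ (HasD_add (h i) IH)) => [v|]; first by rewrite big_cons.
by apply/funext => q; rewrite big_cons.
Qed.

Lemma HasD_prod (I : Type) (s : seq I) (f : I -> V -> R) x (df : I -> V -> R) :
  (forall i, HasD (f i) x (df i)) -> (forall i, f i x != 0) ->
  HasD (fun q => \prod_(i <- s) f i q) x
    (fun v => (\prod_(i <- s) f i x) * \sum_(i <- s) (df i v / f i x)).
Proof.
move=> h hn; elim: s => [|i s IH].
  apply: HasD_eqd (HasD_ext _ (HasD_cst 1 x)) => [v|]; first by rewrite !big_nil mulr0.
  by apply/funext => q; rewrite big_nil.
apply: HasD_eqd (HasD_ext _ (HasD_mul (h i) IH)) => [v|]; last first.
  by apply/funext => q; rewrite big_cons.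
rewrite !big_cons mulrDr; have := hn i; move: (f i x) => a a0.
rewrite addrC; congr (_ + _); first by field.
by rewrite mulrA.
Qed.
Lemma HasD_scale c f x df : HasD f x df ->
  HasD (fun q => c * f q) x (fun v => c * df v).
Proof.
move=> h; apply: HasD_eqd (HasD_mul (HasD_cst c x) h) => v.
by rewrite mulr0 addr0.
Qed.

End HasD.

Section Main.
Variables (R : realType) (r : nat) (d : nat -> nat) (lam : nat -> R).
Hypotheses (hd1 : d 1%N = 1%N) (hl1 : lam 1%N = 0)
  (hd : forall i : nat, (2 <= i <= r.+2)%N -> (2 <= d i)%N)
  (hl : forall i : nat, (2 <= i <= r.+2)%N -> 0 < lam i).

Notation V := 'rV[R]_(r.+2 + r.+1).

Definition a (j : 'I_r.+1) : R := Num.sqrt (d j.+2)%:R.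
Definition Dj (j : 'I_r.+1) : R := (d j.+2)%:R.
Definition m : R := \sum_(j < r.+1) Dj j.
Definition Z (q : V) (j : 'I_r.+1) : R := Num.sqrt (lam j.+2) * Yc q j.
Definition e (j : 'I_r.+1) : R := 2 * Dj j / m.
Definition x0 (q : V) : R := Xc q ord0.
Definition xs (q : V) (j : 'I_r.+1) : R := Xc q (lift ord0 j).
Definition Nf (q : V) : R := 1 - m^-1 * (1 - x0 q) ^+ 2.
Definition Pf (q : V) : R := \prod_(j < r.+1) Z q j `^ e j.

Lemma Dj_ge2 j : 2 <= Dj j.
Proof. rewrite /Dj (ler_nat R 2); apply: hd; apply/andP; split=> //; rewrite !ltnS; have := ltn_ord j; by rewrite ltnS. Qed.

Lemma Dj_gt0 j : 0 < Dj j.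
Proof. exact: lt_le_trans (Dj_ge2 j). Qed.

Lemma m_ge2 : 2 <= m.
Proof.
rewrite /m big_ord_recl; have := Dj_ge2 ord0.
have : 0 <= \sum_(i < r) Dj (lift ord0 i) by apply: sumr_ge0 => i _; exact: ltW (Dj_gt0 _).
lra.
Qed.

Lemma m_gt0 : 0 < m. Proof. have := m_ge2; lra. Qed.

Lemma lam_gt0 (j : 'I_r.+1) : 0 < lam j.+2.
Proof. apply: hl; apply/andP; split=> //; rewrite !ltnS; have := ltn_ord j; by rewrite ltnS. Qed.

Lemma X1E q : X1 q = x0 q.
Proof.
rewrite /X1 big_mkcond big_ord_recl /= big1 ?addr0 // => i _.
Qed.

Lemma ntotE : (ntot r.+2 d)%:R - 1 = m :> R.
Proof.
rewrite /ntot big_add1 /= big_nat_recl // hd1 big_mkord natrD natr_sum /m.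
by rewrite addrC addKr.
Qed.

Lemma LfunE q : Defs.Lfun lam q =
  x0 q ^+ 2 + \sum_(j < r.+1) xs q j ^+ 2 + \sum_(j < r.+1) lam j.+2 * Yc q j ^+ 2 - 1.
Proof. by rewrite /Defs.Lfun big_ord_recl. Qed.

Lemma HfunE q : Hfun d q = x0 q + \sum_(j < r.+1) a j * xs q j.
Proof.
rewrite /Hfun big_ord_recl /= hd1 sqrtr1 mul1r; congr (_ + _).
Qed.

Lemma FfunE q : Ffun d lam q = Nf q / Pf q.
Proof. by rewrite /Ffun ntotE X1E. Qed.

Lemma HasD_Xc i (q : V) : HasD (fun p : V => Xc p i) q (fun v => Xc v i).
Proof.
have E : forall p : V, Xc p i = p 0 (lshift r.+1 i) by move=> p; rewrite /Xc mxE.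
apply: HasD_eqd (HasD_ext _ (HasD_coord _ q)) => [v|]; first by rewrite E.
by apply/funext => p; rewrite E.
Qed.

Lemma HasD_Yc j (q : V) : HasD (fun p : V => Yc p j) q (fun v => Yc v j).
Proof.
have E : forall p : V, Yc p j = p 0 (rshift r.+2 j) by move=> p; rewrite /Yc mxE.
apply: HasD_eqd (HasD_ext _ (HasD_coord _ q)) => [v|]; first by rewrite E.
by apply/funext => p; rewrite E.
Qed.

Definition dLf (q v : V) : R :=
  \sum_(i < r.+2) 2 * Xc q i * Xc v i + \sum_(j < r.+1) 2 * lam j.+2 * Yc q j * Yc v j.

Lemma HasD_L q : HasD (Defs.Lfun lam) q (dLf q).
Proof.
have h1 := @HasD_sum _ _ _ (index_enum 'I_r.+2)
  (fun i (p : V) => Xc p i * Xc p i) q (fun i (v : V) => Xc q i * Xc v i + Xc q i * Xc v i)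
  (fun i => HasD_mul (HasD_Xc i q) (HasD_Xc i q)).
have h2 := @HasD_sum _ _ _ (index_enum 'I_r.+1)
  (fun j (p : V) => lam j.+2 * (Yc p j * Yc p j)) q
  (fun j (v : V) => lam j.+2 * (Yc q j * Yc v j + Yc q j * Yc v j))
  (fun j => HasD_scale (lam j.+2) (HasD_mul (HasD_Yc j q) (HasD_Yc j q))).
apply: HasD_eqd (HasD_ext _ (HasD_add (HasD_add h1 h2) (HasD_cst (-1) q))) => [v|].
  rewrite /dLf addr0; congr (_ + _); apply: eq_bigr => i _; ring.
by apply/funext => p; rewrite /Defs.Lfun; congr (_ + _ - _); apply: eq_bigr => i _;
  rewrite expr2.
Qed.

Definition dHf (v : V) : R := \sum_(i < r.+2) Num.sqrt (d i.+1)%:R * Xc v i.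

Lemma HasD_H q : HasD (Hfun d) q dHf.
Proof.
have h1 := @HasD_sum _ _ _ (index_enum 'I_r.+2)
  (fun i (p : V) => Num.sqrt (d i.+1)%:R * Xc p i) q (fun i (v : V) => Num.sqrt (d i.+1)%:R * Xc v i)
  (fun i => HasD_scale _ (HasD_Xc i q)).
exact: h1.
Qed.

Definition dFf (q v : V) : R := (Pf q)^-1 *
  (2 * m^-1 * (1 - x0 q) * x0 v - Nf q * \sum_(j < r.+1) e j * Yc v j / Yc q j).

Lemma Z_gt0 q j : 0 < Yc q j -> 0 < Z q j.
Proof. by move=> h; rewrite /Z mulr_gt0 // sqrtr_gt0 lam_gt0. Qed.

Lemma Pf_gt0 q : (forall j, 0 < Yc q j) -> 0 < Pf q.
Proof. move=> h; rewrite /Pf; apply: prodr_gt0 => j _; exact: powR_gt0 (Z_gt0 (h j)). Qed.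

Lemma HasD_F q : (forall j, 0 < Yc q j) -> HasD (Ffun d lam) q (dFf q).
Proof.
move=> hY.
have hZ j : HasD (fun p => Z p j `^ e j) q
    (fun v => e j * Z q j `^ (e j - 1) * (Num.sqrt (lam j.+2) * Yc v j)).
  have := HasD_comp1 (HasD_scale (Num.sqrt (lam j.+2)) (HasD_Yc j q))
    (is_derive1_powR (e j) (Z_gt0 (hY j))).
  by move=> h; apply: HasD_eqd h => v; rewrite mulrA.
have hP := @HasD_prod _ _ _ (index_enum 'I_r.+1) _ _ _ hZ (fun j => lt0r_neq0 (powR_gt0 _ (Z_gt0 (hY j)))).
have hN : HasD Nf q (fun v => 2 * m^-1 * (1 - x0 q) * x0 v).
  have h0 := HasD_Xc ord0 q.
  have h1 := HasD_add (HasD_cst 1 q) (HasD_scale (-1) h0).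
  apply: HasD_eqd (HasD_ext _ (HasD_add (HasD_cst 1 q) (HasD_scale (- m^-1) (HasD_mul h1 h1)))) => [v|].
    rewrite /x0; ring.
  by apply/funext => p; rewrite /Nf /x0; ring.
have hF := HasD_mul hN (HasD_inv hP (lt0r_neq0 (Pf_gt0 hY))).
apply: HasD_eqd (HasD_ext _ hF) => [v|]; last first.
  by apply/funext => p; rewrite FfunE.
rewrite -/(Pf q) /dFf.
have P0 := lt0r_neq0 (Pf_gt0 hY).
have -> : \sum_(j < r.+1) e j * Z q j `^ (e j - 1) * (Num.sqrt (lam j.+2) * Yc v j) / Z q j `^ e j
  = \sum_(j < r.+1) e j * Yc v j / Yc q j.
  apply: eq_bigr => j _.
  have hz := Z_gt0 (hY j); have hy := hY j.
  rewrite powRB ?powRr1 ?(ltW hz) ?(gt_eqF hz) ?implybT //.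
  have hp := powR_gt0 (e j) hz.
  move: hz hp; rewrite /Z => hz hp.
  have s0 : Num.sqrt (lam j.+2) != 0 by rewrite gt_eqF // sqrtr_gt0 lam_gt0.
  move: hz hp; set s := Num.sqrt _; set P := _ `^ _; set y := Yc q j => hz hp.
  have y0 : y != 0 by rewrite gt_eqF.
  have P00 : P != 0 by rewrite gt_eqF.
  by field; rewrite ?s0 ?y0 ?P00.
by field; rewrite P0 andbT gt_eqF // m_gt0.
Qed.

Definition mkv (c0 : R) (cx cy : 'I_r.+1 -> R) : V :=
  row_mx (\row_(i < r.+2) (if unlift ord0 i is Some j then cx j else c0))
         (\row_(j < r.+1) cy j).

Lemma mkv_x0 c0 cx cy : x0 (mkv c0 cx cy) = c0.
Proof. by rewrite /x0 /Xc /mkv row_mxKl mxE unlift_none. Qed.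

Lemma mkv_xs c0 cx cy j : xs (mkv c0 cx cy) j = cx j.
Proof. by rewrite /xs /Xc /mkv row_mxKl mxE liftK. Qed.

Lemma mkv_Y c0 cx cy j : Yc (mkv c0 cx cy) j = cy j.
Proof. by rewrite /Yc /mkv row_mxKr mxE. Qed.

Lemma mkvE (q : V) : q = mkv (x0 q) (xs q) (Yc q).
Proof.
rewrite -[q in LHS]hsubmxK /mkv; congr row_mx; apply/rowP => i; rewrite !mxE //.
  by case: unliftP => [j ->|->]; rewrite /xs /x0 /Xc mxE.
by rewrite /Yc mxE.
Qed.

Lemma dLfE q v : dLf q v = 2 * x0 q * x0 v + 2 * \sum_(j < r.+1) xs q j * xs v j
  + 2 * \sum_(j < r.+1) lam j.+2 * Yc q j * Yc v j.
Proof.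
rewrite /dLf big_ord_recl !mulr_sumr; congr (_ + _ + _); apply: eq_bigr => j _;
  rewrite /xs; ring.
Qed.

Lemma dHfE v : dHf v = x0 v + \sum_(j < r.+1) a j * xs v j.
Proof. by rewrite /dHf big_ord_recl /= hd1 sqrtr1 mul1r. Qed.

Lemma sum_delta n (k : 'I_n) (A : R) : \sum_(l < n) (l == k)%:R * A = A.
Proof.
rewrite (bigD1 k) //= eqxx mul1r big1 ?addr0 // => i /negbTE ->; by rewrite mul0r.
Qed.

Lemma sum_delta2 n (F : 'I_n -> R) (k k' : 'I_n) (A B : R) :
  (forall l, F l = (l == k)%:R * A - (l == k')%:R * B) -> \sum_l F l = A - B.
Proof. by move=> h; rewrite (eq_bigr _ (fun l _ => h l)) sumrB !sum_delta. Qed.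

Lemma sum_a2 : \sum_(j < r.+1) a j * a j = m.
Proof.
by apply: eq_bigr => j _; rewrite /a -expr2 sqr_sqrtr // ler0n.
Qed.

Lemma sum_e : \sum_(j < r.+1) e j = 2.
Proof.
have m0 := lt0r_neq0 m_gt0. by rewrite /e -mulr_suml -mulr_sumr -/m -mulrA divff // mulr1.
Qed.

Lemma Nf_gt0 q : `|X1 q - 1| < Num.sqrt 2 -> 0 < Nf q.
Proof.
rewrite X1E /Nf => h.
have h2 : (1 - x0 q) ^+ 2 < 2.
  have -> : (1 - x0 q) ^+ 2 = `|x0 q - 1| ^+ 2 by rewrite real_normK ?num_real // -sqrrN opprB.
  have s2 : Num.sqrt 2 ^+ 2 = 2 :> R by rewrite sqr_sqrtr.
  have := normr_ge0 (x0 q - 1); move: h s2; set t := `|_|; set u := Num.sqrt 2.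
  nra.
have := m_ge2; have := m_gt0 => m0 m2.
have mi : 0 < m^-1 by rewrite invr_gt0.
have mm : m^-1 * m = 1 by rewrite mulVf // lt0r_neq0.
rewrite subr_gt0; move: h2 mi mm m2; set t := (1 - x0 q) ^+ 2; set w := m^-1; nra.
Qed.

Lemma sum_deltaf n (k : 'I_n) (f : 'I_n -> R) : \sum_(l < n) (l == k)%:R * f l = f k.
Proof.
rewrite (bigD1 k) //= eqxx mul1r big1 ?addr0 // => i /negbTE ->; by rewrite mul0r.
Qed.

Lemma sum_dl2 n (f : 'I_n -> R) (k k' : 'I_n) (A B : R) :
  \sum_l f l * ((l == k)%:R * A - (l == k')%:R * B) = f k * A - f k' * B.
Proof.
rewrite (eq_bigr (fun l => (l == k)%:R * (f l * A) - (l == k')%:R * (f l * B))).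
  by rewrite sumrB !(sum_deltaf _ (fun l => f l * _)).
by move=> l _; ring.
Qed.

Lemma sum_dl1 n (f : 'I_n -> R) (k : 'I_n) (A : R) :
  \sum_l f l * ((l == k)%:R * A) = f k * A.
Proof. by rewrite (eq_bigr (fun l => (l == k)%:R * (f l * A))) ?(sum_deltaf _ (fun l => f l * _)) // => l _; ring. Qed.

Lemma sum_mul0 n (f : 'I_n -> R) : \sum_l f l * 0 = 0.
Proof. by rewrite big1 // => l _; rewrite mulr0. Qed.

Lemma sum_mulc n (f g : 'I_n -> R) c : \sum_l f l * (g l * c) = c * \sum_l g l * f l.
Proof. by rewrite mulr_sumr; apply: eq_bigr => l _; ring. Qed.

Lemma dLf_mkv q c0 cx cy : dLf q (mkv c0 cx cy) = 2 * x0 q * c0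
  + 2 * \sum_(j < r.+1) xs q j * cx j + 2 * \sum_(j < r.+1) (lam j.+2 * Yc q j) * cy j.
Proof.
rewrite dLfE mkv_x0; congr (_ + _ * _ + _ * _); apply: eq_bigr => j _;
  by rewrite ?mkv_xs ?mkv_Y.
Qed.

Lemma dHf_mkv c0 cx cy : dHf (mkv c0 cx cy) = c0 + \sum_(j < r.+1) a j * cx j.
Proof. rewrite dHfE mkv_x0; congr (_ + _); apply: eq_bigr => j _; by rewrite mkv_xs. Qed.

Lemma dF_mkv q c0 cx cy : dFf q (mkv c0 cx cy) = (Pf q)^-1 *
  (2 * m^-1 * (1 - x0 q) * c0 - Nf q * \sum_(j < r.+1) (e j / Yc q j) * cy j).
Proof.
rewrite /dFf mkv_x0; congr (_ * (_ - _ * _)); apply: eq_bigr => j _.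
by rewrite mkv_Y; ring.
Qed.

Definition cst : R := (m - 1) / m ^+ 2.

Lemma crit_char q : Dset d lam q ->
  (forall v, dLf q v = 0 -> dHf v = 0 -> dFf q v = 0) ->
  [/\ x0 q = 0, (forall j, xs q j = a j / m)
    & (forall j, Yc q j = Num.sqrt (cst * Dj j / lam j.+2))].
Proof.
case=> hL hH hY hX hc.
have N0 := Nf_gt0 hX.
have P0 := Pf_gt0 hY.
have m0 := m_gt0; have m2 := m_ge2.
have cr c0 cx cy : 2 * x0 q * c0 + 2 * \sum_(j < r.+1) xs q j * cx j
    + 2 * \sum_(j < r.+1) (lam j.+2 * Yc q j) * cy j = 0 ->
  c0 + \sum_(j < r.+1) a j * cx j = 0 ->
  2 * m^-1 * (1 - x0 q) * c0 = Nf q * \sum_(j < r.+1) (e j / Yc q j) * cy j.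
  move=> h1 h2; have := hc (mkv c0 cx cy).
  rewrite dLf_mkv dHf_mkv dF_mkv => /(_ h1 h2) /eqP.
  by rewrite mulf_eq0 invr_eq0 (gt_eqF P0) /= subr_eq0 => /eqP.
set j0 := (@ord0 r).
have Y0 := hY j0; have l0 := lam_gt0 j0.
have a0 : 0 < a j0 by rewrite sqrtr_gt0 Dj_gt0.
have e0 : 0 < e j0 by rewrite /e mulr_gt0 ?invr_gt0 ?mulr_gt0 ?Dj_gt0.
have hi k : xs q k = xs q j0 / a j0 * a k.
  set A := xs q k * a j0 - xs q j0 * a k.
  set s := - A / (lam j0.+2 * Yc q j0).
  have := cr 0 (fun l => (l == k)%:R * a j0 - (l == j0)%:R * a k) (fun l => (l == j0)%:R * s).
  rewrite !sum_dl2 (sum_dl1 (fun (j : 'I_r.+1) => lam j.+2 * Yc q j)) (sum_dl1 (fun j => e j / Yc q j)) !mulr0.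
  move=> h.
  have {h} : 0 = Nf q * (e j0 / Yc q j0 * s).
    apply: h; last by rewrite add0r; ring.
    rewrite /s /A; by field; rewrite !gt_eqF.
  move=> /esym /eqP; rewrite mulf_eq0 (gt_eqF N0) /= mulf_eq0 (gt_eqF (divr_gt0 e0 Y0)) /= => /eqP hs.
  have hA : A = - s * (lam j0.+2 * Yc q j0) by rewrite /s; field; rewrite !gt_eqF.
  move: hA; rewrite hs /A oppr0 mul0r => /eqP; rewrite subr_eq0 => /eqP h.
  by apply: (mulIf (lt0r_neq0 a0)); rewrite h; field; rewrite gt_eqF.
have hii (k : 'I_r.+1) : Dj j0 * (lam k.+2 * Yc q k ^+ 2) = Dj k * (lam j0.+2 * Yc q j0 ^+ 2).
  have := cr 0 (fun _ => 0) (fun l => (l == j0)%:R * (lam k.+2 * Yc q k) - (l == k)%:R * (lam j0.+2 * Yc q j0)).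
  rewrite !sum_mul0 (sum_dl2 (fun (j : 'I_r.+1) => lam j.+2 * Yc q j)) !mulr0.
  move=> h; have {h} := h ltac:(ring) ltac:(ring).
  rewrite (sum_dl2 (fun j => e j / Yc q j)) => /esym /eqP.
  rewrite mulf_eq0 (gt_eqF N0) /= subr_eq0 => /eqP h.
  have Yk := hY k.
  transitivity ((e j0 / Yc q j0 * (lam k.+2 * Yc q k)) * (m * Yc q j0 * Yc q k / 2)).
    by rewrite /e; field; rewrite !gt_eqF.
  by rewrite h /e; field; rewrite !gt_eqF.
have hH' : \sum_(j < r.+1) a j * xs q j = 1 - x0 q.
  by move: hH; rewrite HfunE => <-; rewrite addrC addKr.
set t := xs q j0 / a j0.
have Sa : \sum_(j < r.+1) a j * xs q j = t * m.
  rewrite -sum_a2 mulr_sumr; apply: eq_bigr => j _; rewrite hi /t; ring.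
have ht : t * m = 1 - x0 q by rewrite -Sa.
have Sx2 : \sum_(j < r.+1) xs q j ^+ 2 = t ^+ 2 * m.
  rewrite -sum_a2 mulr_sumr; apply: eq_bigr => j _; rewrite hi /t; ring.
set S := \sum_(j < r.+1) Yc q j * (lam j.+2 * Yc q j).
have hS : S = 1 - x0 q ^+ 2 - t ^+ 2 * m.
  move: hL; rewrite LfunE Sx2 => h.
  have -> : S = \sum_(j < r.+1) lam j.+2 * Yc q j ^+ 2 by apply: eq_bigr => j _; ring.
  move: h; set U := \sum_(j < r.+1) _; move=> h; lra.
have S0 : 0 < S.
  rewrite /S (bigD1 j0) //=.
  have : 0 <= \sum_(i < r.+1 | i != j0) Yc q i * (lam i.+2 * Yc q i).
    by apply: sumr_ge0 => i _; rewrite mulr_ge0 ?ltW ?mulr_gt0 ?lam_gt0.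
  have : 0 < Yc q j0 * (lam j0.+2 * Yc q j0) by rewrite !mulr_gt0.
  lra.
have hN : Nf q = 1 - t ^+ 2 * m.
  by rewrite /Nf -ht; field; rewrite gt_eqF.
set s := - (x0 q - t) / S.
have := cr 1 (fun l => a l * (- m^-1)) (fun l => Yc q l * s).
rewrite !sum_mulc sum_a2 Sa -/S.
rewrite (eq_bigr (fun j => e j)); last by move=> j _; field; rewrite gt_eqF.
rewrite sum_e => h.
have {h} : 2 * m^-1 * (1 - x0 q) * 1 = Nf q * (s * 2).
  apply: h.
    by rewrite /s; field; rewrite !gt_eqF.
  by field; rewrite gt_eqF.
rewrite -ht => h.
have eq1 : t * S = - Nf q * (x0 q - t).
  have : t = Nf q * s.
    transitivity (2 / m * (t * m) * 1 / 2); first by field; rewrite gt_eqF.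
    by rewrite h; field.
  by move=> ht2; rewrite {1}ht2 /s; field; rewrite gt_eqF.
have eA : S = Nf q - x0 q ^+ 2 by rewrite hS hN; ring.
have E1 : x0 q * (Nf q - t * x0 q) = 0.
  rewrite (_ : _ * _ = t * S + Nf q * (x0 q - t)); last by rewrite eA; ring.
  by rewrite eq1; ring.
have E2 : Nf q - t * x0 q = 1 - t.
  rewrite hN (_ : 1 - t ^+ 2 * m - t * x0 q = 1 - t * (t * m) - t * x0 q); last by ring.
  by rewrite ht; ring.
have t1 : t < 1.
  have : t ^+ 2 * 2 <= t ^+ 2 * m by rewrite ler_wpM2l ?sqr_ge0.
  move: N0; rewrite hN; nra.
have hx0 : x0 q = 0.
  by move: E1; rewrite E2 => /eqP; rewrite mulf_eq0 subr_eq0 (gt_eqF t1) orbF => /eqP.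
have htm : t = m^-1 by apply: (mulIf (lt0r_neq0 m0)); rewrite mulVf ?lt0r_neq0 // ht hx0 subr0.
split => //.
  by move=> j; rewrite hi -/t htm mulrC.
move=> k.
have Sv : S = 1 - m^-1 by rewrite eA hN htm hx0; field; rewrite gt_eqF.
set c' := lam j0.+2 * Yc q j0 ^+ 2 / Dj j0.
have D0 := Dj_gt0 j0.
have hk (j : 'I_r.+1) : lam j.+2 * Yc q j ^+ 2 = c' * Dj j.
  by rewrite /c'; apply: (mulfI (lt0r_neq0 D0)); rewrite hii; field; rewrite gt_eqF.
have Sc : S = c' * m.
  rewrite /S /m mulr_sumr; apply: eq_bigr => j _; rewrite -hk; ring.
have hc' : c' = cst by rewrite /cst; apply: (mulIf (lt0r_neq0 m0)); rewrite -Sc Sv; field; rewrite gt_eqF.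
have Yk := hY k; have lk := lam_gt0 k.
rewrite -hc' -hk mulrC mulKf ?gt_eqF // sqrtr_sqr gtr0_norm //.
Qed.
Lemma cst_gt0 : 0 < cst.
Proof. have := m_ge2 => h; rewrite /cst; apply: divr_gt0; [lra | apply: exprn_gt0; lra]. Qed.

Definition Yp (j : 'I_r.+1) : R := Num.sqrt (cst * Dj j / lam j.+2).
Definition p : V := mkv 0 (fun j => a j / m) Yp.

Lemma Yp_gt0 j : 0 < Yp j.
Proof. rewrite sqrtr_gt0; apply: divr_gt0; [apply: mulr_gt0; [exact: cst_gt0 | exact: Dj_gt0] | exact: lam_gt0]. Qed.

Lemma lamYp2 (j : 'I_r.+1) : lam j.+2 * Yp j ^+ 2 = cst * Dj j.
Proof.
rewrite sqr_sqrtr; last by rewrite ltW // -sqrtr_gt0 Yp_gt0.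
by field; rewrite gt_eqF ?lam_gt0.
Qed.

Lemma sum_lamYp2 : \sum_(j < r.+1) lam j.+2 * Yp j ^+ 2 = cst * m.
Proof. by rewrite /m mulr_sumr; apply: eq_bigr => j _; rewrite lamYp2. Qed.

Lemma sum_a2m : \sum_(j < r.+1) a j * (a j / m) = 1.
Proof.
rewrite (eq_bigr (fun j => a j * a j * m^-1)); last by move=> j _; ring.
by rewrite -mulr_suml sum_a2 divff // gt_eqF ?m_gt0.
Qed.

Lemma Dset_p : Dset d lam p.
Proof.
have m0 := m_gt0.
split.
- rewrite LfunE mkv_x0.
  rewrite (eq_bigr (fun j => a j * (a j / m) / m)); last first.
    by move=> j _; rewrite mkv_xs; ring.
  rewrite -mulr_suml sum_a2m.
  rewrite (eq_bigr (fun (j : 'I_r.+1) => lam j.+2 * Yp j ^+ 2)); last by move=> j _; rewrite mkv_Y.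
  by rewrite sum_lamYp2 /cst; field; rewrite gt_eqF.
- rewrite HfunE mkv_x0 add0r -[RHS]sum_a2m; apply: eq_bigr => j _; by rewrite mkv_xs.
- by move=> j; rewrite mkv_Y Yp_gt0.
- rewrite X1E mkv_x0 sub0r normrN normr1 -{1}sqrtr1 ltr_sqrt //; lra.
Qed.

Lemma crit_p : crit_on_D d lam p.
Proof.
have hY : forall j, 0 < Yc p j by move=> j; rewrite mkv_Y Yp_gt0.
have [dF eF] := HasD_F hY.
split; [exact: Dset_p | exact: dF | ].
move=> v; rewrite (HasD_L p).2 (HasD_H p).2 eF => hL hH.
have m0 := m_gt0; have c0 := cst_gt0.
rewrite /dFf.
have YpE j : Yc p j = Yp j by rewrite mkv_Y.
have e1 : \sum_(j < r.+1) e j * Yc v j / Yc p j =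
    2 / (m * cst) * \sum_(j < r.+1) lam j.+2 * Yp j * Yc v j.
  rewrite mulr_sumr; apply: eq_bigr => j _; rewrite YpE /e.
  have hD : Dj j = lam j.+2 * Yp j ^+ 2 / cst by rewrite lamYp2; field; rewrite gt_eqF.
  rewrite hD; have := Yp_gt0 j => y0.
  by field; rewrite !gt_eqF.
have e2 : \sum_(j < r.+1) lam j.+2 * Yp j * Yc v j = x0 v / m.
  move: hL hH; rewrite dLfE dHfE !mkv_x0 => hL hH.
  have E1 : \sum_(j < r.+1) xs p j * xs v j = m^-1 * \sum_(j < r.+1) a j * xs v j.
    by rewrite mulr_sumr; apply: eq_bigr => j _; rewrite mkv_xs; ring.
  have E2 : \sum_(j < r.+1) lam j.+2 * Yc p j * Yc v j = \sum_(j < r.+1) lam j.+2 * Yp j * Yc v j.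
    by apply: eq_bigr => j _; rewrite YpE.
  rewrite E1 E2 in hL.
  have hs : \sum_(j < r.+1) a j * xs v j = - x0 v by move: hH => /eqP; rewrite addrC addr_eq0 => /eqP.
  move: hL; rewrite hs; set U := \sum_(j < r.+1) _ => hL.
  apply: (mulIf (lt0r_neq0 m0)); rewrite divfK ?gt_eqF //.
  move: hL; set w := m^-1; have hw : w * m = 1 by rewrite mulVf ?gt_eqF.
  move=> hL'.
  have hU : U = w * x0 v.
    transitivity ((2 * 0 * x0 v + 2 * (w * - x0 v) + 2 * U) / 2 + w * x0 v); first by field.
    by rewrite hL'; ring.
  by rewrite hU -mulrA mulrC -mulrA [m * _]mulrC hw mulr1.
rewrite e1 e2 /Nf mkv_x0 /cst.
by apply/eqP; rewrite mulf_eq0; apply/orP; right; apply/eqP; field; rewrite !gt_eqF //; have := m_ge2; lra.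
Qed.

Lemma Pf_exp q : (forall j, 0 < Yc q j) ->
  Pf q = expR (\sum_(j < r.+1) e j * ln (Z q j)).
Proof.
move=> hY; rewrite /Pf expR_sum; apply: eq_bigr => j _.
by rewrite /powR gt_eqF ?Z_gt0.
Qed.

Lemma ln_le_sub1 (y : R) : 0 < y -> ln y <= y - 1.
Proof. move=> y0; have := expR_ge1Dx (ln y); rewrite lnK ?posrE //; lra. Qed.

Lemma Zp2 (j : 'I_r.+1) : Z p j ^+ 2 = cst * Dj j.
Proof. by rewrite /Z mkv_Y exprMn sqr_sqrtr ?ltW ?lam_gt0 // lamYp2. Qed.

Lemma Z2 q (j : 'I_r.+1) : Z q j ^+ 2 = lam j.+2 * Yc q j ^+ 2.
Proof. by rewrite /Z exprMn sqr_sqrtr ?ltW ?lam_gt0. Qed.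

Lemma min_p (q : V) : Dset d lam q -> Ffun d lam p <= Ffun d lam q.
Proof.
case=> hL hH hY hX.
have hYp : forall j, 0 < Yc p j by move=> j; rewrite mkv_Y Yp_gt0.
have m0 := m_gt0; have c0 := cst_gt0.
rewrite !FfunE.
have Np_eq : Nf p = cst * m.
  by rewrite /Nf mkv_x0 /cst subr0 expr1n mulr1; field; rewrite gt_eqF.
have Nq0 := Nf_gt0 hX.
have Np0 : 0 < Nf p by rewrite Np_eq mulr_gt0.
set Sq := \sum_(j < r.+1) Z q j ^+ 2.
have hSq : Sq <= Nf q.
  have E : Sq = 1 - x0 q ^+ 2 - \sum_(j < r.+1) xs q j ^+ 2.
    move: hL; rewrite LfunE.
    rewrite (eq_bigr (fun j => Z q j ^+ 2) (fun j _ => esym (Z2 q j))) -/Sq; lra.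
  set u := 1 - x0 q.
  have hu : \sum_(j < r.+1) a j * xs q j = u.
    by move: hH; rewrite HfunE /u => <-; rewrite addrC addKr.
  have CS : 0 <= \sum_(j < r.+1) (xs q j - u / m * a j) ^+ 2.
    by apply: sumr_ge0 => j _; rewrite sqr_ge0.
  rewrite (eq_bigr (fun j => xs q j ^+ 2 + (- 2 * (u / m)) * (a j * xs q j)
       + (u / m) ^+ 2 * (a j * a j))) in CS; last by move=> j _; ring.
  rewrite !big_split /= -!mulr_sumr hu sum_a2 in CS.
  have CS' : u ^+ 2 / m <= \sum_(j < r.+1) xs q j ^+ 2.
    move: CS; set X := \sum_(j < r.+1) _.
    have -> : X + - 2 * (u / m) * u + (u / m) ^+ 2 * m = X - u ^+ 2 / m.
      by field; rewrite gt_eqF.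
    lra.
  rewrite E /Nf -/u.
  have : 0 <= x0 q ^+ 2 by rewrite sqr_ge0.
  have -> : m^-1 * u ^+ 2 = u ^+ 2 / m by rewrite mulrC.
  lra.
have S0 : 0 < Sq.
  rewrite /Sq (bigD1 ord0) //=.
  have : 0 <= \sum_(i < r.+1 | i != ord0) Z q i ^+ 2.
    by apply: sumr_ge0 => i _; rewrite sqr_ge0.
  have : 0 < Z q ord0 ^+ 2 by rewrite exprn_gt0 ?Z_gt0.
  lra.
set A := Sq / (cst * m).
have A0 : 0 < A by rewrite /A; apply: divr_gt0 => //; apply: mulr_gt0.
set y := fun j => Z q j * Z q j * (A * (Z p j * Z p j))^-1.
have hy j : 0 < y j.
  have zq := Z_gt0 (hY j); have zp := Z_gt0 (hYp j).
  rewrite /y; apply: mulr_gt0; [exact: mulr_gt0 | rewrite invr_gt0; apply: mulr_gt0 => //; exact: mulr_gt0].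
have hlj j : Dj j / m * ln (y j) = e j * (ln (Z q j) - ln (Z p j)) - Dj j / m * ln A.
  have zq := Z_gt0 (hY j); have zp := Z_gt0 (hYp j).
  have pq : Z q j \in Num.pos by rewrite posrE.
  have pp : Z p j \in Num.pos by rewrite posrE.
  have pA : A \in Num.pos by rewrite posrE.
  have pqq : Z q j * Z q j \in Num.pos by rewrite posrE mulr_gt0.
  have ppp : Z p j * Z p j \in Num.pos by rewrite posrE mulr_gt0.
  have pAp : A * (Z p j * Z p j) \in Num.pos by rewrite posrE mulr_gt0 // -posrE.
  have pinv : (A * (Z p j * Z p j))^-1 \in Num.pos by rewrite posrE invr_gt0 -posrE.
  rewrite /y /= (lnM pqq pinv) (lnV pAp) (lnM pA ppp) (lnM pq pq) (lnM pp pp).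
  by rewrite /e; field; rewrite gt_eqF.
have hs1 : \sum_(j < r.+1) Dj j / m * ln (y j) <= \sum_(j < r.+1) Dj j / m * (y j - 1).
  apply: ler_sum => j _; apply: ler_wpM2l; last exact: ln_le_sub1.
  by rewrite ltW // divr_gt0 ?Dj_gt0.
have sD : \sum_(j < r.+1) Dj j / m = 1 by rewrite -mulr_suml divff // gt_eqF.
have hs2 : \sum_(j < r.+1) Dj j / m * (y j - 1) = 0.
  rewrite (eq_bigr (fun j => Z q j ^+ 2 * (A * cst * m)^-1 - Dj j / m)); last first.
    move=> j _; rewrite /y /= -[Z q j * Z q j]expr2 -[Z p j * Z p j]expr2 Zp2.
    have D0 := Dj_gt0 j.
    rewrite /A; field.
    by rewrite (gt_eqF m0) (gt_eqF c0) (gt_eqF D0) (gt_eqF S0).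
  rewrite sumrB sD -mulr_suml -/Sq /A; field.
  by rewrite (gt_eqF m0) (gt_eqF c0) (gt_eqF S0).
have hs3 : \sum_(j < r.+1) Dj j / m * ln (y j) =
    \sum_(j < r.+1) e j * (ln (Z q j) - ln (Z p j)) - ln A.
  rewrite (eq_bigr _ (fun j _ => hlj j)) sumrB -mulr_suml sD mul1r //.
have key : \sum_(j < r.+1) e j * ln (Z q j) - \sum_(j < r.+1) e j * ln (Z p j) <= ln A.
  rewrite -sumrB (eq_bigr (fun j => e j * (ln (Z q j) - ln (Z p j)))); last first.
    by move=> j _; ring.
  move: hs1; rewrite hs2 hs3; lra.
have hPP : Pf q / Pf p <= Nf q / Nf p.
  rewrite (Pf_exp hY) (Pf_exp hYp) -expRB.
  apply: (le_trans (y := A)).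
    by rewrite -[X in _ <= X](lnK (A0 : A \in Num.pos)) ler_expR.
  by rewrite /A -Np_eq ler_wpM2r // ltW // invr_gt0.
have Pq0 := Pf_gt0 hY; have Pp0 := Pf_gt0 hYp.
move: hPP; rewrite !ler_pdivrMr // mulrAC ler_pdivlMr // => h.
by rewrite mulrAC ler_pdivlMr // mulrC.
Qed.

End Main.

Unset Implicit Arguments.

Theorem lemma4p4 (R : realType) (r : nat) (d : nat -> nat) (lam : nat -> R)
  (hr : (2 <= r)%N) (hd1 : d 1%N = 1%N) (hl1 : lam 1%N = 0)
  (hd : forall i : nat, (2 <= i <= r)%N -> (2 <= d i)%N)
  (hl : forall i : nat, (2 <= i <= r)%N -> 0 < lam i) :
  exists p : 'rV_(r + r.-1),
    [/\ crit_on_D d lam p,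
        (forall q : 'rV_(r + r.-1), crit_on_D d lam q -> q = p)
      & (forall q : 'rV_(r + r.-1), Dset d lam q -> Ffun d lam p <= Ffun d lam q)].
Proof.
case: r hr hd hl => [//|[//|r]] hr hd hl.
exists (p r d lam); split.
- by apply: crit_p.
- move=> q [hD hdiff hcrit].
  have hY : forall j, 0 < Yc q j by case: hD.
  have H' : forall v, dLf lam q v = 0 -> dHf d v = 0 -> dFf d lam q v = 0.
    move=> v; rewrite -(HasD_L lam q).2 -(HasD_H d q).2 -(HasD_F hd1 hd hl hY).2.
    exact: hcrit.
  have [h0 h1 h2] := crit_char hd1 hd hl hD H'.
  rewrite (mkvE q) h0 /p; congr mkv; apply/funext => j; [exact: h1 | exact: h2].
- by move=> q hq; apply: min_p.
Qed.
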